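(* Let $G=(V,E)$ be a finite graph with $V\neq\emptyset$, let $f$ be a weight function of one of the two types described in the context (with its associated integer $k$), let $g(S)=f(S)/|S|$, and let $\epsilon\ge 0$. Let $S^p$ be the vertex set returned by the parallel peeling algorithm described in the context, and let $S^*$ be a nonempty vertex set maximizing $g$ over all nonempty subsets of $V$. Then $g(S^p)\ge \dfrac{g(S^* )}{k(1+\epsilon)}$.
   Context: Let $G=(V,E)$ be a (directed or undirected) graph. For $S\subseteq V$, $G[S]=(S,E[S])$ is the induced subgraph, $E[S]=\{(u,v)\in E: u,v\in S\}$. Two types of weight functions $f:2^V\to\mathbb{R}_{\ge 0}$ are considered. (Type A, with $k=2$; covers the metrics DG, DW, FD): fixed numbers $a_i\ge 0$ for each vertex $u_i$ and $c_{ij}\ge 0$ for each edge $(u_i,u_j)\in E$ are given, and $f(S)=\sum_{u_i\in S}a_i+\sum_{(u_i,u_j)\in E[S]}c_{ij}$. (Type B, with $k\ge 3$ the clique size; covers TDS for $k=3$ and $k$-clique densest subgraph for general $k$): $f(S)$ is the number of $k$-cliques of $G[S]$. The density is $g(S)=f(S)/|S|$ for nonempty $S$. The peeling weight of $u\in S$ is $w_u(S)=f(S)-f(S\setminus\{u\})$. Parallel peeling algorithm with parameter $\epsilon\ge 0$: set $S_0=V$, $i=1$; while $S_{i-1}\neq\emptyset$: let $U=\{u\in S_{i-1}: w_u(S_{i-1})\le k(1+\epsilon)\,g(S_{i-1})\}$, set $S_i=S_{i-1}\setminus U$, and increase $i$ by one. The algorithm outputs $S^p=\arg\max_{S_i}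 g(S_i)$ over the nonempty sets $S_i$ produced. *)

(* Defs.v *)
From mathcomp Require Import all_boot all_order all_algebra.
Set Implicit Arguments. Unset Strict Implicit. Unset Printing Implicit Defensive.
Import Order.TTheory GRing.Theory Num.Theory.
Local Open Scope ring_scope.

(* A finite graph on vertex type T is given by an edge relation E : rel T
   (E u v means (u,v) is an edge).  Graphs are loopless. *)

Section Peeling.
Variables (R : realFieldType) (T : finType).

Definition typeA_weight (E : rel T) (a : T -> R) (c : T -> T -> R)
    (S : {set T}) : R :=
  \sum_(u in S) a u + \sum_(p in [set p : T * T | (p.1 \in S) && (p.2 \in S) && E p.1 p.2]) c p.1 p.2.

Definition is_typeA (E : rel T) (f : {set T} -> R) : Prop :=
  exists (a : T -> R) (c : T -> T -> R),
    (forall u, 0 <= a u) /\ (forall u v, E u v -> 0 <= c u v) /\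
    f = typeA_weight E a c.

Definition is_clique (E : rel T) (K : {set T}) : bool :=
  [forall u in K, forall v in K, (u != v) ==> E u v].

Definition kclique_count (E : rel T) (k : nat) (S : {set T}) : R :=
  (#|[set K : {set T} | (K \subset S) && (#|K| == k) && is_clique E K]|)%:R.

Definition is_typeB (E : rel T) (k : nat) (f : {set T} -> R) : Prop :=
  symmetric E /\ f = kclique_count E k.

Definition density (f : {set T} -> R) (S : {set T}) : R := f S / (#|S|)%:R.

Definition peel_weight (f : {set T} -> R) (u : T) (S : {set T}) : R :=
  f S - f (S :\ u).

(* one round of parallel peeling: remove U = {u in S | w_u(S) <= k(1+eps) g(S)} *)
Definition peel_step (f : {set T} -> R) (k : nat) (eps : R) (S : {set T}) : {set T} :=
  [set u in S | k%:R * (1 + eps) * density f S < peel_weight f u S].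

Definition peel_iter (f : {set T} -> R) (k : nat) (eps : R) (i : nat) : {set T} :=
  iter i (peel_step f k eps) [set: T].

End Peeling.

(* Main.v *)
Require Import Defs.
From mathcomp Require Import all_boot all_order all_algebra.
From mathcomp Require Import zify ring lra.
Import Order.TTheory GRing.Theory Num.Theory.
Local Open Scope ring_scope.

Section Abs.
Variables (R : realFieldType) (T : finType) (f : {set T} -> R) (k : nat) (eps : R).
Hypothesis f0 : f set0 = 0.
Hypothesis fge0 : forall S, 0 <= f S.
Hypothesis mono : forall (S S' : {set T}) u, S \subset S' -> u \in S ->
  peel_weight f u S <= peel_weight f u S'.
Hypothesis sumw : forall S : {set T}, \sum_(u in S) peel_weight f u S <= k%:R * f S.
Hypothesis kgt0 : (0 < k)%N.
Hypothesis eps0 : 0 <= eps.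

Lemma key S : S != set0 -> exists2 u, u \in S &
  peel_weight f u S <= k%:R * (1 + eps) * density f S.
Proof.
move=> SN.
case: (boolP [exists u in S, peel_weight f u S <= k%:R * (1 + eps) * density f S]).
  by move=> /exists_inP[u uS H]; exists u.
move=> /exists_inPn H; exfalso.
have cS : (0 < #|S|)%N by rewrite card_gt0.
have : \sum_(u in S) (k%:R * (1 + eps) * density f S) < \sum_(u in S) peel_weight f u S.
  apply: ltr_sum.
    case/set0Pn: SN => x xS; apply/hasP; exists x => //; by rewrite mem_index_enum.
  by move=> u uS; rewrite ltNge; apply: H.
rewrite sumr_const /density -[_ *+ #|S|]mulr_natr.
have -> : k%:R * (1 + eps) * (f S / #|S|%:R) * #|S|%:R = k%:R * (1 + eps) * f S.
  by rewrite -mulrA divfK // pnatr_eq0 -lt0n.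
move=> Hlt; have := sumw S; have := fge0 S.
have kp : (0 : R) < k%:R by rewrite ltr0n.
move: Hlt; set F := f S; set W := \sum_(i in S) _ => Hlt H0 H1.
have : k%:R * F <= k%:R * (1 + eps) * F.
  rewrite -mulrA ler_pM2l // mulrDl mul1r lerDl mulr_ge0 //.
lra.
Qed.

Lemma step_sub S : peel_step f k eps S \subset S.
Proof. by apply/subsetP => x; rewrite inE => /andP[]. Qed.

Lemma iter_card n : peel_iter f k eps n = set0 \/
   (#|peel_iter f k eps n| + n <= #|T|)%N.
Proof.
elim: n => [|n IH]; first by right; rewrite addn0 max_card.
rewrite /peel_iter iterS -/(peel_iter f k eps n).
case: (eqVneq (peel_step f k eps (peel_iter f k eps n)) set0) => [->|Hn]; first by left.
right.
have Sn : peel_iter f k eps n != set0.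
  by case/set0Pn: Hn => x; rewrite inE => /andP[xS _]; apply/set0Pn; exists x.
case: IH => [E0|IH]; first by rewrite E0 eqxx in Sn.
have [u uS Hu] := @key _ Sn.
have : peel_step f k eps (peel_iter f k eps n) \proper peel_iter f k eps n.
  apply/properP; split; first exact: step_sub.
  by exists u => //; rewrite inE uS /= -leNgt.
move/proper_card; lia.
Qed.

Lemma abs_main (Sp Sstar : {set T}) :
  Sstar != set0 ->
  (forall i, peel_iter f k eps i != set0 ->
     density f (peel_iter f k eps i) <= density f Sp) ->
  (forall S : {set T}, S != set0 -> density f S <= density f Sstar) ->
  density f Sstar / (k%:R * (1 + eps)) <= density f Sp.
Proof.
move=> SN Hp Hs.
have kp : (0 : R) < k%:R * (1 + eps).
  by apply: mulr_gt0; [by rewrite ltr0n | by rewrite (lt_le_trans ltr01) // lerDl].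
set d := density f Sstar.
have wstar u : u \in Sstar -> d <= peel_weight f u Sstar.
  move=> uS; rewrite /peel_weight.
  have cs := cardsD1 u Sstar; rewrite uS in cs.
  have fS : f Sstar = d * #|Sstar|%:R.
    rewrite /d /density -mulrA mulVf ?mulr1 //.
    by rewrite pnatr_eq0 cs.
  case: (eqVneq (Sstar :\ u) set0) => [E|NE].
    by rewrite E f0 subr0 fS cs E cards0 mulr1.
  have H : f (Sstar :\ u) <= d * #|Sstar :\ u|%:R.
    rewrite -ler_pdivrMr ?ltr0n ?card_gt0 //; exact: Hs.
  have cs' : #|Sstar|%:R = 1 + #|Sstar :\ u|%:R :> R by rewrite cs natrD.
  rewrite fS cs' mulrDr mulr1; lra.
rewrite leNgt; apply/negP => Hlt.
have sub : forall n, Sstar \subset peel_iter f k eps n.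
  elim=> [|n IH]; first exact: subsetT.
  apply/subsetP => u uS.
  have uSn : u \in peel_iter f k eps n by apply: (subsetP IH).
  rewrite /peel_iter iterS -/(peel_iter f k eps n) inE uSn /= ltNge.
  apply/negP => Hu.
  have Nn : peel_iter f k eps n != set0.
    by apply/set0Pn; exists u.
  have H1 := wstar u uS.
  have H2 := @mono _ _ _ IH uS.
  have H3 := Hp n Nn.
  have H4 : k%:R * (1 + eps) * density f (peel_iter f k eps n) <=
            k%:R * (1 + eps) * density f Sp by rewrite ler_pM2l.
  move: Hlt; rewrite ltr_pdivlMr // => Hlt.
  have : d <= density f Sp * (k%:R * (1 + eps)).
    rewrite mulrC; apply: le_trans H4; apply: le_trans H1 _.
    exact: le_trans H2 Hu.
  by rewrite leNgt Hlt.
have := sub #|T|.+1.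
case: (iter_card #|T|.+1) => [->|]; first by rewrite subset0 (negbTE SN).
lia.
Qed.
End Abs.

Section TA.
Variables (R : realFieldType) (T : finType) (E : rel T) (a : T -> R) (c : T -> T -> R).
Hypothesis ha : forall u, 0 <= a u.
Hypothesis hc : forall u v, E u v -> 0 <= c u v.
Definition PS (S : {set T}) : {set T * T} :=
  [set p : T * T | (p.1 \in S) && (p.2 \in S) && E p.1 p.2].
Definition Qu (u : T) : {set T * T} := [set p : T * T | (p.1 == u) || (p.2 == u)].
Let f := typeA_weight E a c.

Lemma sum_sub_le (I : finType) (A B : {set I}) (F : I -> R) :
  A \subset B -> (forall i, i \in B -> 0 <= F i) ->
  \sum_(i in A) F i <= \sum_(i in B) F i.
Proof.
move=> AB H; rewrite [X in _ <= X](big_setID A) /=.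
have -> : B :&: A = A by apply/setIidPr.
rewrite lerDl; apply: sumr_ge0 => i; rewrite inE => /andP[_]; exact: H.
Qed.

Lemma ta_f0 : f set0 = 0.
Proof.
rewrite /f /typeA_weight -/(PS set0) big_set0.
have -> : PS set0 = set0 by apply/setP => p; rewrite !inE.
by rewrite big_set0 addr0.
Qed.

Lemma ta_ge0 (S : {set T}) : 0 <= f S.
Proof.
rewrite /f /typeA_weight; apply: addr_ge0; apply: sumr_ge0 => // p.
by rewrite inE => /andP[_]; apply: hc.
Qed.

Lemma ta_weight (S : {set T}) (u : T) : u \in S ->
  peel_weight f u S = a u + \sum_(p in PS S :&: Qu u) c p.1 p.2.
Proof.
move=> uS.
rewrite /peel_weight /f /typeA_weight -/(PS S) -/(PS (S :\ u)).
rewrite (big_setD1 u uS) (big_setID (Qu u)) /=.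
have -> : PS S :\: Qu u = PS (S :\ u).
  apply/setP => p; rewrite !inE.
  by case: (p.1 == u); case: (p.2 == u); rewrite /= ?andbF ?andbT.
ring.
Qed.

Lemma ta_mono (S S' : {set T}) u : S \subset S' -> u \in S ->
  peel_weight f u S <= peel_weight f u S'.
Proof.
move=> sub uS; rewrite !ta_weight //; last exact: (subsetP sub).
rewrite lerD2l; apply: sum_sub_le.
  apply/subsetP => p; rewrite !inE => /andP[/andP[/andP[p1 p2] ->] ->].
  by rewrite (subsetP sub _ p1) (subsetP sub _ p2).
by move=> p; rewrite !inE => /andP[/andP[_ /hc]].
Qed.

Lemma sum_pick (S : {set T}) (j : T) (x : R) : j \in S ->
  \sum_(u in S) (if j == u then x else 0) = x.
Proof.
move=> jS; rewrite (big_setD1 j) //= eqxx big1 ?addr0 // => i.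
by rewrite !inE => /andP[ne _]; rewrite eq_sym (negbTE ne).
Qed.

Lemma ta_sum (S : {set T}) : \sum_(u in S) peel_weight f u S <= 2%:R * f S.
Proof.
rewrite (eq_bigr (fun u => a u + \sum_(p in PS S :&: Qu u) c p.1 p.2)); last first.
  by move=> u uS; rewrite ta_weight.
rewrite big_split /= /f /typeA_weight -/(PS S).
have H : \sum_(u in S) \sum_(p in PS S :&: Qu u) c p.1 p.2 <=
         \sum_(u in S) \sum_(p in PS S)
            ((if p.1 == u then c p.1 p.2 else 0) + (if p.2 == u then c p.1 p.2 else 0)).
  apply: ler_sum => u _.
  rewrite (eq_bigl (fun p => (p \in PS S) && (p \in Qu u))); last first.
    by move=> p; rewrite inE.
  rewrite big_mkcondr /=. 
  apply: ler_sum => p; rewrite inE => /andP[_ /hc h].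
  by rewrite inE; case: (p.1 == u); case: (p.2 == u); rewrite /= ?addr0 ?add0r; lra.
move: H; rewrite exchange_big /=.
rewrite (eq_bigr (fun p => c p.1 p.2 + c p.1 p.2)); last first.
  move=> p; rewrite inE => /andP[/andP[p1 p2] _].
  by rewrite big_split /= !sum_pick.
rewrite big_split /=.
have : 0 <= \sum_(i in S) a i by apply: sumr_ge0.
lra.
Qed.
End TA.

Section TB.
Variables (R : realFieldType) (T : finType) (E : rel T) (k : nat).
Definition CS (S : {set T}) : {set {set T}} :=
  [set K : {set T} | (K \subset S) && (#|K| == k) && is_clique E K].
Definition CSu (S : {set T}) (u : T) := CS S :&: [set K : {set T} | u \in K].

Lemma kc_weight S u : peel_weight (@kclique_count R T E k) u S = #|CSu S u|%:R.
Proof.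
rewrite /peel_weight /kclique_count -/(CS S) -/(CS (S :\ u)).
have -> : CS (S :\ u) = CS S :\: [set K : {set T} | u \in K].
  apply/setP => K; rewrite !inE subsetD1.
  by case: (K \subset S); case: (u \in K); rewrite ?andbF ?andbT.
rewrite -(cardsID [set K : {set T} | u \in K] (CS S)) natrD /CSu; ring.
Qed.

Lemma kc_mono (S S' : {set T}) u : S \subset S' -> u \in S ->
  peel_weight (@kclique_count R T E k) u S <=
  peel_weight (@kclique_count R T E k) u S'.
Proof.
move=> sub _; rewrite !kc_weight ler_nat; apply: subset_leq_card.
apply/subsetP => K; rewrite !inE => /andP[/andP[/andP[KS ->] ->] ->].
by rewrite (subset_trans KS sub).
Qed.

Lemma kc_sum (S : {set T}) :
  \sum_(u in S) peel_weight (@kclique_count R T E k) u S <=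
  k%:R * @kclique_count R T E k S.
Proof.
under eq_bigr do rewrite kc_weight.
rewrite -natr_sum /kclique_count -/(CS S) -natrM ler_nat.
have -> : (\sum_(u in S) #|CSu S u| = \sum_(u in S) \sum_(K | (K \in CS S) && (u \in K)) 1)%N.
  apply: eq_bigr => u _; rewrite sum1dep_card; apply: eq_card => K.
  by rewrite !inE.
rewrite (exchange_big_dep (fun K => K \in CS S)) /=; last by move=> u K _ /andP[].
rewrite mulnC -sum_nat_const leq_eqVlt; apply/orP; left; apply/eqP.
apply: eq_bigr => K KC.
rewrite sum1dep_card.
move: KC; rewrite inE => /andP[/andP[KS /eqP <-] Kc].
apply: eq_card => u; rewrite !inE -/(CS S).
case uK: (u \in K); last by rewrite !andbF.
by rewrite (subsetP KS u uK) KS eqxx Kc.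
Qed.
End TB.

Theorem theorem4p2 (R : realFieldType) (T : finType) (E : rel T)
    (f : {set T} -> R) (k : nat) (eps : R) (Sp Sstar : {set T}) :
  (0 < #|T|)%N ->
  irreflexive E ->
  ((k = 2%N /\ is_typeA E f) \/ (3 <= k)%N /\ is_typeB E k f) ->
  0 <= eps ->
  (* S^p is a maximizer of g among the nonempty sets produced by the algorithm *)
  (exists i, Sp = peel_iter f k eps i) ->
  Sp != set0 ->
  (forall i, peel_iter f k eps i != set0 ->
     density f (peel_iter f k eps i) <= density f Sp) ->
  (* S^* maximizes g over nonempty subsets of V *)
  Sstar != set0 ->
  (forall S : {set T}, S != set0 -> density f S <= density f Sstar) ->
  density f Sstar / (k%:R * (1 + eps)) <= density f Sp.
Proof.
move=> _ _ Hty eps0 _ _.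
case: Hty => [[-> [a [c [ha [hc ->]]]]] | [k3 [_ ->]]].
  move=> Hp SN Hs; apply: abs_main => //.
  - exact: ta_f0.
  - exact: ta_ge0.
  - by move=> S S' u; apply: ta_mono.
  - exact: ta_sum.
move=> Hp SN Hs; apply: abs_main => //.
- rewrite /kclique_count.
  suff -> : [set K : {set T} | (K \subset set0) && (#|K| == k) && is_clique E K] = set0.
    by rewrite cards0.
  apply/setP => K; rewrite !inE subset0.
  case: eqP => [->|]; rewrite //= cards0.
  have -> : (0 == k)%N = false by apply/eqP; lia.
  by [].
- exact: kc_mono.
- exact: kc_sum.
- lia.
Qed.
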